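(* Let $\mathcal{G}$ be a mutant-biased fitness graph and $k$ a budget. Let $S^*\in\arg\max_{S\subseteq V,|S|\le k}\operatorname{fp}_{\mathcal{G}}(S)$ and let $S_{\mathrm{gr}}$ be the output of the Greedy algorithm. Then $\operatorname{fp}_{\mathcal{G}}(S_{\mathrm{gr}})\ge(1-1/e)\operatorname{fp}_{\mathcal{G}}(S^* )$.
   Context: A fitness graph is $\mathcal{G}=(G,(m,r))$ where $G=(V,E,w)$ is a strongly connected directed graph, $w(u,\cdot)$ is a probability distribution over out-neighbours of $u$, and $r,m\colon V\to(0,\infty)$; it is mutant-biased if $m(u)\ge r(u)$ for all $u$. For a configuration (set of mutants) $X\subseteq V$, $f_X(u)=m(u)$ if $u\in X$, else $r(u)$. The Heterogeneous Moran process starts at $\mathcal{X}_0=S$; from $\mathcal{X}_t=X$ it picks $u$ with probability $f_X(u)/\sum_v f_X(v)$, then $v$ with probability $w(u,v)$, and $v$ takes the type of $u$. $\operatorname{fp}_{\mathcal{G}}(S)$ is the probability that the process eventually reaches $V$. The Greedy algorithm starts with $S=\emptyset$ and, for $k$ iterations, adds to $S$ a node $v\notin S$ maximizing $\operatorname{fp}_{\mathcal{G}}(S\cup\{v\})$; its output is $S_{\mathrm{gr}}$. *)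

(* Defs.v *)
From HB Require Import structures.
From mathcomp Require Import all_boot all_order all_algebra.
From mathcomp Require Import all_classical all_reals all_analysis.
Set Implicit Arguments. Unset Strict Implicit. Unset Printing Implicit Defensive.
Import Order.TTheory GRing.Theory Num.Theory.
Import numFieldNormedType.Exports.
Local Open Scope ring_scope.

Section Moran.
Variables (R : realType) (V : finType).

Definition is_fitness_graph (E : rel V) (w : V -> V -> R) (r m : V -> R) : Prop :=
  [/\ (forall u v, E u v -> 0 < w u v),
      (forall u v, ~~ E u v -> w u v = 0),
      (forall u, \sum_(v : V) w u v = 1),
      (forall u v, connect E u v) &
      (forall u, 0 < r u /\ 0 < m u)].

Definition mutant_biased (r m : V -> R) : Prop := forall u, r u <= m u.

Definition fitness (r m : V -> R) (X : {set V}) (u : V) : R :=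
  if u \in X then m u else r u.

Definition moran_step (X : {set V}) (u v : V) : {set V} :=
  if u \in X then v |: X else X :\ v.

Fixpoint reach_within (w : V -> V -> R) (r m : V -> R) (n : nat) (X : {set V}) : R :=
  if X == [set: V] then 1 else
  match n with
  | 0 => 0
  | n'.+1 => \sum_(u : V) \sum_(v : V)
       (fitness r m X u / \sum_(x : V) fitness r m X x) * w u v
         * reach_within w r m n' (moran_step X u v)
  end.

Definition fp (w : V -> V -> R) (r m : V -> R) (S : {set V}) : R :=
  limn (fun n : nat => reach_within w r m n S).

(* s (in order of insertion) is a run of the Greedy algorithm for k iterations:
   at step i, the node s_i is not in S_i = {s_0,..,s_{i-1}} and maximizes
   fp(S_i ∪ {v}) over v ∉ S_i. *)
Definition greedy_run (w : V -> V -> R) (r m : V -> R) (k : nat) (s : seq V) : Prop :=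
  size s = k /\
  forall (p : seq V) (v : V) (t : seq V), s = p ++ v :: t ->
    v \notin p /\
    forall x : V, x \notin p ->
      fp w r m (x |: [set y in p]) <= fp w r m (v |: [set y in p]).

Definition greedy_output (s : seq V) : {set V} := [set y in s].
End Moran.

(* Main.v *)
Set Warnings "-all".
Require Import Defs.
From HB Require Import structures.
From mathcomp Require Import all_boot all_order all_algebra.
From mathcomp Require Import all_classical all_reals all_analysis.
From mathcomp Require Import ring lra.
Import mathcomp.boot.finset.
Import numFieldNormedType.Exports.
Local Open Scope classical_set_scope.
Local Open Scope ring_scope.
Import Order.TTheory GRing.Theory Num.Theory.
Local Open Scope ring_scope.
Section Lazy.
Variables (R : realType) (V : finType) (E : rel V) (w : V -> V -> R) (r m : V -> R).
Variable v0 : V.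
Hypothesis hw0 : forall u v, 0 <= w u v.
Hypothesis hw1 : forall u, \sum_v w u v = 1.
Hypothesis hE : forall u v, E u v -> 0 < w u v.
Hypothesis hconn : forall u v, connect E u v.
Hypothesis hr : forall u, 0 < r u.
Hypothesis hm : forall u, r u <= m u.

Definition Om := (V * (V * bool))%type.
Definition MM : R := \sum_u m u.
Definition pp (o : Om) : R :=
  (if o.2.2 then r o.1 else m o.1 - r o.1) * w o.1 o.2.1 / MM.
Definition phi (o : Om) (X : {set V}) : {set V} :=
  if o.1 \in X then o.2.1 |: X else if o.2.2 then X :\ o.2.1 else X.
Definition st := ({set V} * {set V})%type.
Definition pstep (o : Om) (s : st) : st := (phi o s.1, phi o s.2).
Fixpoint Tt (n : nat) (g : st -> R) (s : st) : R :=
  if n is n'.+1 then \sum_o pp o * Tt n' g (pstep o s) else g s.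

Lemma MM_gt0 : 0 < MM.
Proof.
rewrite /MM (bigD1 v0) //=; apply: (@lt_le_trans _ _ (m v0)).
  exact: lt_le_trans (hr v0) (hm v0).
rewrite lerDl; apply: sumr_ge0 => u _; exact: le_trans (ltW (hr u)) (hm u).
Qed.

Lemma sumO (F : Om -> R) :
  \sum_o F o = \sum_u \sum_v (F (u, (v, true)) + F (u, (v, false))).
Proof.
rewrite (eq_bigr (fun o => F (o.1, o.2))); last by case.
rewrite -(pair_bigA _ (fun u x => F (u, x))) /=; apply: eq_bigr => u _.
rewrite (eq_bigr (fun o => F (u, (o.1, o.2)))); last by case.
rewrite -(pair_bigA _ (fun v b => F (u, (v, b)))) /=; apply: eq_bigr => v _.
by rewrite big_bool /= addrC.
Qed.

Lemma pp_ge0 o : 0 <= pp o.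
Proof.
rewrite /pp; apply: divr_ge0; last exact: ltW MM_gt0.
apply: mulr_ge0 => //; case: ifP => _; first exact: ltW.
by rewrite subr_ge0.
Qed.

Lemma pp_sum : \sum_o pp o = 1.
Proof.
rewrite sumO /pp /=.
under eq_bigr => u _ do under eq_bigr => v _ do
  rewrite -mulrDl -mulrDl addrC subrK.
under eq_bigr => u _ do rewrite -mulr_suml -mulr_sumr hw1 mulr1.
by rewrite -mulr_suml divff // gt_eqF // MM_gt0.
Qed.

Lemma Tt_ge0 n g s : (forall s, 0 <= g s) -> 0 <= Tt n g s.
Proof.
move=> g0; elim: n s => [|n IH] s //=.
by apply: sumr_ge0 => o _; apply: mulr_ge0 => //; apply: pp_ge0.
Qed.

Lemma Tt_le n g g' s : (forall s, g s <= g' s) -> Tt n g s <= Tt n g' s.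
Proof.
move=> gg; elim: n s => [|n IH] s //=.
by apply: ler_sum => o _; apply: ler_wpM2l => //; apply: pp_ge0.
Qed.

Lemma TtD n g g' s : Tt n (fun s => g s + g' s) s = Tt n g s + Tt n g' s.
Proof.
elim: n s => [|n IH] s //=.
by rewrite -big_split /=; apply: eq_bigr => o _; rewrite IH mulrDr.
Qed.

Lemma TtZ n a g s : Tt n (fun s => a * g s) s = a * Tt n g s.
Proof.
elim: n s => [|n IH] s //=.
rewrite mulr_sumr; apply: eq_bigr => o _; rewrite IH; ring.
Qed.

Lemma TtB n g g' s : Tt n (fun s => g s - g' s) s = Tt n g s - Tt n g' s.
Proof.
elim: n s => [|n IH] s //=.
by rewrite -sumrB /=; apply: eq_bigr => o _; rewrite IH mulrBr.
Qed.

Lemma Tt_cst n c s : Tt n (fun _ => c) s = c.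
Proof.
elim: n s => [|n IH] s //=.
under eq_bigr => o _ do rewrite IH.
by rewrite -mulr_suml pp_sum mul1r.
Qed.

Lemma Tt_add a b g s : Tt (a + b) g s = Tt a (Tt b g) s.
Proof.
elim: a s => [|a IH] s //=.
by apply: eq_bigr => o _; rewrite IH.
Qed.

Lemma Tt_inv (P : st -> bool) n g c s :
  (forall o s, P s -> P (pstep o s)) -> (forall s, P s -> g s = c) ->
  P s -> Tt n g s = c.
Proof.
move=> Pst Pg; elim: n s => [|n IH] s Ps /=; first exact: Pg.
under eq_bigr => o _ do rewrite IH ?Pst //.
by rewrite -mulr_suml pp_sum mul1r.
Qed.

Lemma Tt_swap n g s : Tt n (fun s => g (s.2, s.1)) s = Tt n g (s.2, s.1).
Proof.
elim: n s => [|n IH] s //=.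
by apply: eq_bigr => o _; rewrite IH.
Qed.

Lemma Tt_sub n g s : (forall s, g s <= \sum_o pp o * g (pstep o s)) ->
  g s <= Tt n g s.
Proof.
move=> gsub; elim: n s => [|n IH] s //=.
apply: le_trans (gsub s) _.
by apply: ler_sum => o _; apply: ler_wpM2l => //; apply: pp_ge0.
Qed.


Lemma phi0 o : phi o set0 = set0.
Proof. by rewrite /phi inE; case: ifP => _ //; rewrite set0D. Qed.

Lemma phiT o : phi o setT = setT.
Proof. by rewrite /phi inE setUT. Qed.

Lemma phiU o (A B : {set V}) : phi o (A :|: B) = phi o A :|: phi o B.
Proof.
rewrite /phi; case: o => u [v b] /=; rewrite inE.
case uA: (u \in A); case uB: (u \in B); case: b => /=;
  apply/setP => y; rewrite !inE;
  by case: (y == v); case: (y \in A); case: (y \in B).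
Qed.

Lemma phi_mono o (A B : {set V}) : A \subset B -> phi o A \subset phi o B.
Proof. by move=> /setUidPr <-; rewrite phiU subsetUl. Qed.

Lemma phiI o (A B : {set V}) : phi o (A :&: B) \subset phi o A :&: phi o B.
Proof. by rewrite subsetI !phi_mono // ?subsetIl ?subsetIr. Qed.

Definition absb (X : {set V}) := (X == set0) || (X == setT).
Definition tr (X : {set V}) : R := if absb X then 0 else 1.

Lemma absb_phi o X : absb X -> absb (phi o X).
Proof. by case/orP => /eqP ->; rewrite /absb ?phi0 ?phiT eqxx ?orbT. Qed.

Lemma edge_out (X : {set V}) : X != set0 -> X != setT ->
  exists u v, [/\ u \in X, v \notin X & 0 < w u v].
Proof.
case/set0Pn => x xX; move=> /eqP XT.
have [y yX] : exists y, y \notin X.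
  apply/existsP; apply: contraT; rewrite negb_exists => /forallP H.
  by exfalso; apply: XT; apply/setP => z; rewrite inE; have := H z; rewrite negbK.
have /connectP [p pth ylast] := hconn x y.
elim: p x xX pth ylast => [|z p IH] x xX /= pth ylast.
  by move: yX; rewrite ylast xX.
case/andP: pth => Exz pth.
case: (boolP (z \in X)) => zX; first exact: IH zX pth ylast.
by exists x, z; split => //; apply: hE.
Qed.

Definition d0 : R := \prod_(o | 0 < pp o) pp o.

Lemma d0_gt0 : 0 < d0.
Proof. by apply: prodr_gt0. Qed.

Lemma pp_le1 o : pp o <= 1.
Proof.
rewrite -pp_sum (bigD1 o) //= lerDl; apply: sumr_ge0 => *; exact: pp_ge0.
Qed.

Lemma d0_le o : 0 < pp o -> d0 <= pp o.
Proof.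
move=> po; rewrite /d0 (bigD1 o) //=.
rewrite ler_piMr ?(ltW po) //; apply: prodr_ile1 => i _.
by rewrite pp_ge0 pp_le1.
Qed.

Lemma d0_le1 : d0 <= 1.
Proof. by apply: prodr_ile1 => i _; rewrite pp_ge0 pp_le1. Qed.

Definition Hit n s := Tt n (fun s : st => ((s.1 == setT)%:R : R)) s.
Definition Nt n s := Tt n (fun s : st => tr s.1) s.

Lemma Hit_lb k s : s.1 != set0 -> (#|~: s.1| <= k)%N -> d0 ^+ k <= Hit k s.
Proof.
elim: k s => [|k IH] s s0 sk.
  rewrite /Hit /=; have -> : s.1 = setT.
    by apply/setP => y; rewrite inE; move: sk; rewrite leqn0 => /eqP/cards0_eq/setP/(_ y); rewrite !inE => /negbFE.
  by rewrite eqxx expr0.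
case: (boolP (s.1 == setT)) => sT.
  rewrite /Hit (@Tt_inv (fun s : st => s.1 == setT) _ _ 1) //.
  - by apply: exprn_ile1; rewrite ?d0_le1 // ltW // d0_gt0.
  - by move=> o s' /eqP /= ->; rewrite phiT.
  - by move=> s' ->.
have [u [v [uX vX wuv]]] := @edge_out s.1 s0 sT.
pose o : Om := (u, (v, true)).
have po : 0 < pp o.
  rewrite /pp /=; apply: divr_gt0; last exact: MM_gt0.
  by apply: mulr_gt0.
rewrite /Hit /= (bigD1 o) //=.
apply: (@le_trans _ _ (pp o * Hit k (pstep o s))); last first.
  rewrite /Hit lerDl; apply: sumr_ge0 => o' _; apply: mulr_ge0; first exact: pp_ge0.
  by apply: Tt_ge0 => s'; case: (_ == _).
have step1 : (pstep o s).1 = v |: s.1 by rewrite /pstep /phi /= uX.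
rewrite exprS; apply: ler_pM; first exact: ltW d0_gt0.
- by apply: exprn_ge0; apply: ltW d0_gt0.
- exact: d0_le.
apply: IH; first by rewrite step1; apply/set0Pn; exists v; rewrite !inE eqxx.
rewrite step1 setCU.
move: sk; rewrite (cardsD1 v (~: s.1)) inE vX /= add1n ltnS.
by apply: leq_trans; rewrite setIC setDE.
Qed.

Lemma tr_ge0 X : 0 <= tr X.
Proof. by rewrite /tr; case: ifP. Qed.
Lemma tr_le1 X : tr X <= 1.
Proof. by rewrite /tr; case: ifP. Qed.

Lemma Nt_abs n s : absb s.1 -> Nt n s = 0.
Proof.
move=> a; rewrite /Nt (@Tt_inv (fun s : st => absb s.1) _ _ 0) //.
- by move=> o s' /= /(absb_phi o).
- by move=> s' /= a'; rewrite /tr a'.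
Qed.

Lemma Nt_Hit n s : Nt n s + Hit n s <= 1.
Proof.
rewrite /Nt /Hit -TtD; apply: (@le_trans _ _ (Tt n (fun _ => 1) s)); last by rewrite Tt_cst.
apply: Tt_le => s' /=.
case: (eqVneq s'.1 setT) => [->|ne].
  by rewrite /tr /absb eqxx orbT add0r.
rewrite addr0; exact: tr_le1.
Qed.

Definition n0 := #|V|.
Definition qq : R := 1 - d0 ^+ n0.

Lemma qq_ge0 : 0 <= qq.
Proof. by rewrite subr_ge0; apply: exprn_ile1; rewrite ?d0_le1 // ltW // d0_gt0. Qed.

Lemma qq_lt1 : qq < 1.
Proof. by rewrite /qq ltrBlDr ltrDl; apply: exprn_gt0; apply: d0_gt0. Qed.

Lemma Nt_n0 s : Nt n0 s <= qq * tr s.1.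
Proof.
case a: (absb s.1); first by rewrite Nt_abs // /tr a mulr0.
rewrite /tr a mulr1.
have s0 : s.1 != set0 by move: a; rewrite /absb; case: (s.1 == set0).
have hl := Hit_lb n0 s s0 (max_card _).
have := Nt_Hit n0 s; rewrite /qq; lra.
Qed.

Lemma Nt_decay j s : Nt (j * n0) s <= qq ^+ j * tr s.1.
Proof.
elim: j s => [|j IH] s; first by rewrite mul0n expr0 mul1r.
rewrite mulSn /Nt Tt_add -/(Nt _ _).
apply: le_trans (@Tt_le _ _ (fun s => qq ^+ j * tr s.1) _ IH) _.
rewrite TtZ -/(Nt _ _) exprSr -mulrA; apply: ler_wpM2l.
  by apply: exprn_ge0; apply: qq_ge0.
exact: Nt_n0.
Qed.

Lemma geo_le0 (x K q : R) : 0 <= q -> q < 1 -> (forall j, x <= K * q ^+ j) -> x <= 0.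
Proof.
move=> q0 q1 H.
have : ((fun j => (K * q ^+ j)%R) @ \oo --> (K * 0)%R)%classic.
  apply: cvgMl_tmp; apply: cvg_expr; by rewrite ger0_norm.
move=> /cvgr_to_ge; rewrite mulr0; apply; exact: nearW.
Qed.

Lemma maxp (G : st -> R) :
  (forall s, G s <= \sum_o pp o * G (pstep o s)) ->
  (forall s, absb s.1 -> absb s.2 -> G s <= 0) -> forall s, G s <= 0.
Proof.
move=> Gs Gabs s.
pose c := \sum_s' `|G s'|.
have c0 : 0 <= c by apply: sumr_ge0.
have Gc : forall s', G s' <= c * (tr s'.1 + tr s'.2).
  move=> s'.
  have cle : G s' <= c.
    apply: le_trans (ler_norm _) _; rewrite /c (bigD1 s') //= lerDl.
    by apply: sumr_ge0.
  rewrite /tr; case a1: (absb s'.1); case a2: (absb s'.2).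
  - by rewrite addr0 mulr0; apply: Gabs.
  - lra.
  - lra.
  - lra.
apply: (@geo_le0 _ (2 * c) qq qq_ge0 qq_lt1) => j.
apply: le_trans (Tt_sub (j * n0) G s Gs) _.
apply: le_trans (Tt_le (j * n0) _ _ s Gc) _.
rewrite TtZ TtD -/(Nt _ _).
have -> : Tt (j * n0) (fun s0 => tr s0.2) s = Nt (j * n0) (s.2, s.1).
  exact: (Tt_swap (j * n0) (fun s0 : st => tr s0.1) s).
have h1 := Nt_decay j s; have h2 := Nt_decay j (s.2, s.1).
have t1 := tr_le1 s.1; have t2 := tr_le1 s.2.
have t1' := tr_ge0 s.1; have t2' := tr_ge0 s.2.
have qj : 0 <= qq ^+ j by apply: exprn_ge0; apply: qq_ge0.
have e1 : qq ^+ j * tr s.1 <= qq ^+ j by rewrite ler_piMr.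
have e2 : qq ^+ j * tr (s.2, s.1).1 <= qq ^+ j by rewrite ler_piMr.
have -> : 2 * c * qq ^+ j = c * (qq ^+ j + qq ^+ j) by ring.
apply: ler_wpM2l => //=.
move: h2 e2 => /= h2 e2; lra.
Qed.

Section Harm.
Variable h : {set V} -> R.
Hypothesis hh : forall X, h X = \sum_o pp o * h (phi o X).
Hypothesis h0 : h set0 = 0.
Hypothesis hT : h setT = 1.
Hypothesis hge0 : forall X, 0 <= h X.

Lemma absbP X : absb X -> X = set0 \/ X = setT.
Proof. by case/orP => /eqP ->; [left|right]. Qed.

Lemma h_monoU (A B : {set V}) : h A <= h (A :|: B).
Proof.
pose G (s : st) := h s.1 - h (s.1 :|: s.2).
suff : G (A, B) <= 0 by rewrite /G /=; lra.
apply: maxp.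
  move=> s; rewrite /G /=.
  under eq_bigr => o _ do rewrite mulrBr -phiU.
  by rewrite sumrB -!hh.
move=> [X Y] /= /absbP [->|->] _; rewrite /G /=.
  by rewrite set0U h0 sub0r oppr_le0.
by rewrite setTU subrr.
Qed.

Lemma h_mono (A B : {set V}) : A \subset B -> h A <= h B.
Proof. by move=> /setUidPr <-; apply: h_monoU. Qed.

Lemma sum4 (a b c d : Om -> R) :
  \sum_o pp o * (a o + b o - c o - d o) =
  \sum_o pp o * a o + \sum_o pp o * b o - \sum_o pp o * c o - \sum_o pp o * d o.
Proof.
rewrite -big_split -!sumrB; apply: eq_bigr => o _ /=; ring.
Qed.

Lemma h_submod (A B : {set V}) : h (A :|: B) + h (A :&: B) <= h A + h B.
Proof.
pose G (s : st) := h (s.1 :|: s.2) + h (s.1 :&: s.2) - h s.1 - h s.2.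
suff : G (A, B) <= 0 by rewrite /G /=; lra.
apply: maxp.
  move=> s; rewrite /G /=.
  apply: (@le_trans _ _ (\sum_o pp o * (h (phi o (s.1 :|: s.2)) + h (phi o (s.1 :&: s.2))
                 - h (phi o s.1) - h (phi o s.2)))).
    by rewrite sum4 -!hh.
  apply: ler_sum => o _; apply: ler_wpM2l; first exact: pp_ge0.
  rewrite phiU; have := h_mono _ _ (phiI o s.1 s.2); lra.
move=> [X Y] /= /absbP [->|->] _; rewrite /G /=.
  by rewrite set0U set0I; lra.
by rewrite setTU setTI; lra.
Qed.

End Harm.

Local Notation a n X := (reach_within w r m n X).
Definition FF (X : {set V}) := \sum_x fitness r m X x.

Lemma fit_gt0 X u : 0 < fitness r m X u.
Proof. rewrite /fitness; case: ifP => _ //; exact: lt_le_trans (hr u) (hm u). Qed.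

Lemma FF_gt0 X : 0 < FF X.
Proof.
rewrite /FF (bigD1 v0) //=; apply: lt_le_trans (fit_gt0 X v0) _.
rewrite lerDl; apply: sumr_ge0 => u _; exact: ltW (fit_gt0 X u).
Qed.

Lemma coef_ge0 X u v : 0 <= fitness r m X u / FF X * w u v.
Proof. by apply: mulr_ge0 => //; apply: divr_ge0; apply: ltW; rewrite ?fit_gt0 ?FF_gt0. Qed.

Lemma coef_sum X : \sum_u \sum_v fitness r m X u / FF X * w u v = 1.
Proof.
under eq_bigr => u _ do rewrite -mulr_sumr hw1 mulr1.
by rewrite -mulr_suml divff // gt_eqF // FF_gt0.
Qed.

Lemma a_ge0 n X : 0 <= a n X.
Proof.
elim: n X => [|n IH] X /=; case: ifP => // _.
by apply: sumr_ge0 => u _; apply: sumr_ge0 => v _; apply: mulr_ge0; rewrite ?coef_ge0.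
Qed.

Lemma a_le1 n X : a n X <= 1.
Proof.
elim: n X => [|n IH] X /=; case: ifP => // _.
rewrite -(coef_sum X); apply: ler_sum => u _; apply: ler_sum => v _.
by rewrite -{2}(mulr1 (_ * w u v)); apply: ler_wpM2l; rewrite ?coef_ge0.
Qed.

Lemma a_step n X : a n X <= a n.+1 X.
Proof.
elim: n X => [|n IH] X.
  by rewrite [a 0 X]/=; case: ifP => XT; [rewrite /= XT | exact: a_ge0].
rewrite [a n.+1 X]/= [a n.+2 X]/=; case: ifP => // _.
apply: ler_sum => u _; apply: ler_sum => v _.
by apply: ler_wpM2l; rewrite ?coef_ge0.
Qed.

Lemma a_cvg X : cvgn (fun n => a n X).
Proof.
apply: nondecreasing_is_cvgn.
  move=> n k /subnKC <-; elim: (k - n)%N => [|d IH]; first by rewrite addn0.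
  by rewrite addnS; apply: le_trans IH (a_step _ _).
by exists 1 => y [n _ <-]; apply: a_le1.
Qed.

Lemma fp_ge0 X : 0 <= fp w r m X.
Proof. by apply: limr_ge; [exact: a_cvg | apply: nearW => n; exact: a_ge0]. Qed.

Lemma fp_T : fp w r m setT = 1.
Proof.
rewrite /fp (_ : (fun n => _) = fun _ => 1); first exact: lim_cst.
by apply: funext => -[|n] /=; rewrite eqxx.
Qed.

Lemma T_ne0 : (setT : {set V}) != set0.
Proof. by apply/set0Pn; exists v0; rewrite inE. Qed.

Lemma fp_0 : fp w r m set0 = 0.
Proof.
rewrite /fp (_ : (fun n => _) = fun _ => 0); first exact: lim_cst.
apply: funext => n; elim: n => [|n IH] /=; rewrite eq_sym (negbTE T_ne0) //.
apply: big1 => u _; apply: big1 => v _.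
by rewrite /moran_step inE set0D IH mulr0.
Qed.


Lemma fp_harm X : X != setT ->
  fp w r m X = \sum_u \sum_v (fitness r m X u / FF X * w u v) * fp w r m (moran_step X u v).
Proof.
move=> XT.
have c1 : (fun n => a n.+1 X) @ \oo --> fp w r m X.
  by have := a_cvg X; rewrite -cvg_shiftS.
have c2 : (fun n => a n.+1 X) @ \oo -->
   \sum_u \sum_v (fitness r m X u / FF X * w u v) * fp w r m (moran_step X u v).
  have -> : (fun n => a n.+1 X) = fun n => \sum_u \sum_v
       (fitness r m X u / FF X * w u v) * a n (moran_step X u v).
    by apply: funext => n /=; rewrite (negbTE XT).
  apply: cvg_big => //; first exact: add_continuous.
  move=> u _; apply: cvg_big => //; first exact: add_continuous.
  by move=> v _; apply: cvgMl_tmp; apply: a_cvg.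
by rewrite -(cvg_lim (@Rhausdorff R) c1) (cvg_lim (@Rhausdorff R) c2).
Qed.

Lemma fp_lazy X : fp w r m X = \sum_o pp o * fp w r m (phi o X).
Proof.
case: (eqVneq X setT) => [->|XT].
  under eq_bigr do rewrite phiT.
  by rewrite -mulr_suml pp_sum mul1r.
rewrite sumO.
pose c u : R := if u \in X then 0 else m u - r u.
have E1 : forall u v, pp (u, (v, true)) * fp w r m (phi (u, (v, true)) X)
   + pp (u, (v, false)) * fp w r m (phi (u, (v, false)) X) =
   (fitness r m X u / FF X * w u v) * fp w r m (moran_step X u v) * (FF X / MM)
   + (c u * w u v) * (fp w r m X / MM).
  move=> u v; rewrite /pp /phi /fitness /moran_step /c /=.
  have F0 : FF X != 0 by rewrite gt_eqF // FF_gt0.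
  have M0 : MM != 0 by rewrite gt_eqF // MM_gt0.
  by case: (u \in X); field; rewrite M0 F0.
under eq_bigr => u _ do under eq_bigr => v _ do rewrite E1.
under eq_bigr => u _ do rewrite big_split /=.
rewrite big_split /=.
under eq_bigr => u _ do rewrite -mulr_suml.
rewrite -mulr_suml -fp_harm //.
under eq_bigr => u _ do rewrite -mulr_suml -mulr_sumr hw1 mulr1.
rewrite -mulr_suml.
have Hs : MM = FF X + \sum_u c u.
  rewrite /MM /FF -big_split; apply: eq_bigr => u _ /=.
  by rewrite /fitness /c; case: (u \in X); ring.
have M0 : FF X + \sum_u c u != 0 by rewrite -Hs gt_eqF // MM_gt0.
rewrite Hs; field; exact: M0.
Qed.

Lemma fp_mono (A B : {set V}) : A \subset B -> fp w r m A <= fp w r m B.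
Proof. apply: h_mono; [exact: fp_lazy | exact: fp_0 | exact: fp_ge0]. Qed.

Lemma fp_submod (A B : {set V}) :
  fp w r m (A :|: B) + fp w r m (A :&: B) <= fp w r m A + fp w r m B.
Proof. apply: h_submod; [exact: fp_lazy | exact: fp_0 | exact: fp_ge0]. Qed.

End Lazy.


Section Greedy.
Variables (R : realType) (V : finType) (f : {set V} -> R).
Hypothesis fmono : forall A B : {set V}, A \subset B -> f A <= f B.
Hypothesis fsub : forall A B : {set V}, f (A :|: B) + f (A :&: B) <= f A + f B.
Hypothesis fge0 : forall A, 0 <= f A.

Lemma set_nil : [set y in ([::] : seq V)] = set0.
Proof. by apply/setP => y; rewrite !inE. Qed.

Lemma set_cons' (x : V) l : [set y in x :: l] = x |: [set y in l].
Proof. by apply/setP => y; rewrite !inE. Qed.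

Lemma union_bound (A : {set V}) (l : seq V) :
  f (A :|: [set y in l]) <= f A + \sum_(x <- l) (f (x |: A) - f A).
Proof.
elim: l => [|x l IH]; first by rewrite set_nil setU0 big_nil addr0.
rewrite set_cons' big_cons.
have H1 := fsub (A :|: [set y in l]) (x |: A).
have -> : A :|: (x |: [set y in l]) = (A :|: [set y in l]) :|: (x |: A).
  by apply/setP => y; rewrite !inE; case: (y == x); case: (y \in A); case: (y \in l).
have H2 : f A <= f ((A :|: [set y in l]) :&: (x |: A)).
  by apply: fmono; rewrite subsetI subsetUl subsetUr.
lra.
Qed.

Lemma greedy_bound (k : nat) (Sopt : {set V}) (s : seq V) (x0 : V) :
  (#|Sopt| <= k)%N -> size s = k ->
  (forall (p : seq V) (v : V) (t : seq V), s = p ++ v :: t ->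
    v \notin p /\ forall x : V, x \notin p ->
      f (x |: [set y in p]) <= f (v |: [set y in p])) ->
  (1 - (expR 1)^-1) * f Sopt <= f [set y in s].
Proof.
move=> hS hsz hgr.
have e0 : 0 <= (expR 1 : R)^-1 by rewrite invr_ge0 expR_ge0.
case: k hS hsz => [|k] hS hsz.
  move: hsz => /size0nil ->; move: hS; rewrite leqn0 => /eqP/cards0_eq ->.
  rewrite set_nil mulrBl mul1r gerBl; exact: mulr_ge0.
pose S i := [set y in take i s].
pose K : R := k.+1%:R.
have K0 : 0 < K by rewrite ltr0n.
pose c : R := 1 - K^-1.
have c0 : 0 <= c by rewrite subr_ge0 invf_le1 // ler1n.
have step : forall i, (i < k.+1)%N -> f Sopt - f (S i) <= K * (f (S i.+1) - f (S i)).
  move=> i ik.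
  have isz : (i < size s)%N by rewrite hsz.
  have Hs : s = take i s ++ nth x0 s i :: drop i.+1 s by rewrite -drop_nth // cat_take_drop.
  have [_ gi] := hgr _ _ _ Hs.
  have Si1 : S i.+1 = nth x0 s i |: S i.
    by apply/setP => y; rewrite /S (take_nth x0 isz) !inE mem_rcons in_cons.
  have d0 : 0 <= f (S i.+1) - f (S i).
    by rewrite subr_ge0; apply: fmono; rewrite Si1 subsetUr.
  have ub := union_bound (S i) (enum Sopt).
  rewrite set_enum in ub.
  have t1 : f Sopt <= f (S i :|: Sopt) by apply: fmono; rewrite subsetUr.
  have t2 : \sum_(x <- enum Sopt) (f (x |: S i) - f (S i)) <=
            \sum_(x <- enum Sopt) (f (S i.+1) - f (S i)).
    apply: ler_sum => x _.
    case: (boolP (x \in take i s)) => xi.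
      have -> : x |: S i = S i by apply/setUidPr; rewrite sub1set /S inE.
      by rewrite subrr.
    by rewrite Si1; apply: lerB => //; apply: gi.
  have t3 : \sum_(x <- enum Sopt) (f (S i.+1) - f (S i)) <= K * (f (S i.+1) - f (S i)).
    rewrite big_enum /= sumr_const -mulr_natl.
    by apply: ler_wpM2r => //; rewrite ler_nat.
  lra.
have D : forall i, (i <= k.+1)%N -> f Sopt - f (S i) <= c ^+ i * f Sopt.
  elim => [|i IH] ik.
    by rewrite expr0 mul1r /S take0 set_nil gerBl.
  have := step i ik; have := IH (ltnW ik).
  rewrite exprSr -mulrA => h1 h2.
  have h3 : f Sopt - f (S i.+1) <= c * (f Sopt - f (S i)).
    rewrite /c; move: h2; set a := f Sopt; set b := f (S i); set d := f (S i.+1).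
    move=> h2; have : (f Sopt - f (S i)) / K <= f (S i.+1) - f (S i).
      by rewrite ler_pdivrMr // mulrC.
    rewrite -/a -/b -/d => h4.
    have -> : (1 - K^-1) * (a - b) = (a - b) - (a - b) / K by ring.
    move: h4; set z := (a - b) / K => h4.
    clearbody a b d z; lra.
  apply: le_trans h3 _.
  have -> : c ^+ i * (c * f Sopt) = c * (c ^+ i * f Sopt) by ring.
  by apply: ler_wpM2l.
have Dk := D k.+1 (leqnn _).
have ce : c ^+ k.+1 <= (expR 1)^-1.
  have : c <= expR (- K^-1) by rewrite /c -[_ - _]/(1 + - K^-1) expR_ge1Dx.
  move=> /(@lerXn2r _ k.+1); rewrite !nnegrE => /(_ c0 (expR_ge0 _)) h.
  apply: le_trans h _.
  by rewrite -expRM_natl mulrN -/K divff ?gt_eqF // expRN.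
have Sk : S k.+1 = [set y in s] by rewrite /S -hsz take_size.
rewrite -Sk.
have : c ^+ k.+1 * f Sopt <= (expR 1)^-1 * f Sopt by apply: ler_wpM2r.
lra.
Qed.

End Greedy.

Theorem theorem3 (R : realType) (V : finType) (E : rel V) (w : V -> V -> R)
    (r m : V -> R) (k : nat) (Sopt : {set V}) (s : seq V) :
  is_fitness_graph E w r m ->
  mutant_biased r m ->
  (#|Sopt| <= k)%N ->
  (forall S : {set V}, (#|S| <= k)%N -> fp w r m S <= fp w r m Sopt) ->
  greedy_run w r m k s ->
  (1 - (expR 1)^-1) * fp w r m Sopt <= fp w r m (greedy_output s).
Proof.
move=> [hE0 hEn hw1 hconn hrm] hmb hS _ [hsz hgr].
have hw0 : forall u v, 0 <= w u v.
  by move=> u v; case: (boolP (E u v)) => euv; [exact: ltW (hE0 _ _ euv) | rewrite hEn].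
have hr : forall u, 0 < r u by move=> u; case: (hrm u).
case: (pickP (fun _ : V => true)) => [v0 _ | none].
  apply: (@greedy_bound R V (fp w r m) _ _ _ k Sopt s v0 hS hsz hgr).
  - exact: (fp_mono R V E w r m v0 hw0 hw1 hE0 hconn hr hmb).
  - exact: (fp_submod R V E w r m v0 hw0 hw1 hE0 hconn hr hmb).
  - exact: (fp_ge0 R V w r m v0 hw0 hw1 hr hmb).
have allT : forall X : {set V}, X = setT.
  by move=> X; apply/setP => y; have := none y.
rewrite (allT (greedy_output s)) (allT Sopt) fp_T mulr1 gerBl invr_ge0.
exact: expR_ge0.
Qed.
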